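(* Let $\phi(x,z)$ be an associate of the additive formal group, $V$ a nonlocal vertex algebra and $(W,Y_W)$ a $\phi$-coordinated quasi $V$-module. Let $u,v\in V$ and suppose $q(x_1,x_2)\in\mathbb{C}[[x_1,x_2]]$ satisfies $q(x_1,x_2)Y_W(u,x_1)Y_W(v,x_2)\in\mathrm{Hom}(W,W((x_1,x_2)))$. Then $$q(\phi(x_2,x_0),x_2)Y_W(Y(u,x_0)v,x_2)=\big(q(x_1,x_2)Y_W(u,x_1)Y_W(v,x_2)\big)|_{x_1=\phi(x_2,x_0)}.$$
   Context: An associate is $\phi(x,z)\in\mathbb{C}((x))[[z]]$ with $\phi(x,0)=x$ and $\phi(\phi(x,x_2),x_0)=\phi(x,x_0+x_2)$. Substitutions $x_1=\phi(x_2,x_0)$ into power series in $x_1,x_2$ or into elements of $\mathrm{Hom}(W,W((x_1,x_2)))$ give elements of $\mathbb{C}((x_2))[[x_0]]$ resp. $\mathrm{Hom}(W,W((x_2)))[[x_0]]$. A nonlocal vertex algebra: $(V,Y,\mathbf1)$ with $Y:V\to\mathrm{Hom}(V,V((x)))$, $Y(\mathbf1,x)=1$, $Y(v,x)\mathbf1\in V[[x]]$ with constant term $v$, and for $u,v,w$ some $l$ with $(x_0+x_2)^lY(u,x_0+x_2)Y(v,x_2)w=(x_0+x_2)^lY(Y(u,x_0)v,x_2)w$. A $\phi$-coordinated quasi $V$-module: $W$ with $Y_W:V\to\mathrm{Hom}(W,W((x)))$, $Y_W(\mathbf1,x)=1_W$, such that for $u,v\in V$ there exists $p(x,y)\in\mathbb{C}[[x,y]]$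 with $p(\phi(x,z),x)\ne0$, $p(x_1,x_2)Y_W(u,x_1)Y_W(v,x_2)\in\mathrm{Hom}(W,W((x_1,x_2)))$ and $p(\phi(x_2,x_0),x_2)Y_W(Y(u,x_0)v,x_2)=(p(x_1,x_2)Y_W(u,x_1)Y_W(v,x_2))|_{x_1=\phi(x_2,x_0)}$. *)

(* Defs.v *)
From mathcomp Require Import all_boot all_order all_algebra.
From mathcomp Require Import complex.
From mathcomp Require Import Rstruct.
From mathcomp Require Import boolp classical_sets fsbigop.

Set Implicit Arguments.
Unset Strict Implicit.
Unset Printing Implicit Defensive.
Import Order.TTheory GRing.Theory Num.Theory.
Local Open Scope classical_set_scope.
Local Open Scope ring_scope.

Notation CC := (Rdefinitions.R[i]).

(* A one-variable formal series  sum_n f_n x^n  (n in Z) is  f : int -> T.  *)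
(* A two-variable formal series  sum_{k,n} f_{k,n} y^k x^n  is              *)
(*   f : int -> int -> T,  f k n = coefficient of y^k x^n.                  *)
(* For an element of C((x))[[z]] (resp. Hom(W,W((x2)))[[x0]]) the FIRST    *)
(* index is the power of the power-series variable z (resp. x0) and the     *)
(* second one the power of the Laurent variable x (resp. x2).               *)
(* A vertex operator Y(u,x)v = sum_n Y u v n x^n  (coefficient of x^n).     *)
(* Infinite sums are finitely-supported sums (fsbigop); in every place they *)
(* are used below the support is finite (truncation conditions).            *)

Definition natE {T : Type} (z : T) (f : nat -> T) (k : int) : T :=
  match k with Posz k' => f k' | Negz _ => z end.

Definition natE2 (p : nat -> nat -> CC) (m n : int) : CC :=
  match m, n with Posz a, Posz b => p a b | _, _ => 0 end.

Definition mul2 {W : lmodType CC} (f : int -> int -> CC) (g : int -> int -> W)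
  : int -> int -> W :=
  fun k n => \sum_(p \in [set: int * int]) (f p.1 p.2 *: g (k - p.1) (n - p.2)).

Definition one2 : int -> int -> CC := fun k n => ((k == 0) && (n == 0))%:R.
Definition xser2 : int -> int -> CC := fun k n => ((k == 0) && (n == 1))%:R.

(* phi(x,z) = sum_{k>=0} phi k . z^k, with phi k n = coefficient of z^k x^n *)
Definition phiE (phi : nat -> int -> CC) : int -> int -> CC :=
  fun k n => natE 0 (fun k' => phi k' n) k.

Definition phipow (phi : nat -> int -> CC) (m : nat) : int -> int -> CC :=
  iter m (mul2 (W := CC^o) (phiE phi)) one2.

Definition phid (phi : nat -> int -> CC) : int -> int -> CC :=
  fun k n => phiE phi k n - xser2 k n.
Definition dpow (phi : nat -> int -> CC) (j : nat) : int -> int -> CC :=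
  iter j (mul2 (W := CC^o) (phid phi)) one2.

(* the expansion of phi(x,z)^{-1} in C((x))[[z]] (valid when phi(x,0) = x):
   phi^{-1} = sum_{j>=0} (-1)^j x^{-j-1} (phi - x)^j ; since (phi - x)^j has
   z-order >= j, only j <= k contribute to the coefficient of z^k. *)
Definition phiinv (phi : nat -> int -> CC) : int -> int -> CC :=
  fun k n => natE 0 (fun k' =>
    \sum_(j < k'.+1) ((-1) ^+ j * dpow phi j k (n + (j.+1)%:Z))) k.

Definition phipowz (phi : nat -> int -> CC) (m : int) : int -> int -> CC :=
  match m with
  | Posz m' => phipow phi m'
  | Negz m' => iter m'.+1 (mul2 (W := CC^o) (phiinv phi)) one2
  end.

(* substitution x1 = phi(x2,x0) into F = sum_{m,l} F m l x1^m x2^l ;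
   result: coefficient of x0^k x2^n. *)
Definition subst (phi : nat -> int -> CC) {W : lmodType CC}
  (F : int -> int -> W) : int -> int -> W :=
  fun k n => \sum_(p \in [set: int * int])
               (phipowz phi p.1 k (n - p.2) *: F p.1 p.2).

Record associate (phi : nat -> int -> CC) : Prop := {
  assoc_laurent : forall k : nat, exists N : int, forall n, n < N -> phi k n = 0;
  assoc_init : forall n : int, phi 0%N n = (n == 1)%:R;
  (* phi(phi(x,x2),x0) = phi(x,x0+x2): coefficient of x0^a x2^j x^n *)
  assoc_comp : forall (a j : nat) (n : int),
    \sum_(m \in [set: int]) (phi a m * phipowz phi m j n)
      = 'C(a + j, a)%:R * phi (a + j)%N n }.

Definition gbinom (m : int) (i : nat) : CC :=
  (\prod_(j < i) ((m - (j : nat)%:Z)%:~R : CC)) / (i`!)%:R.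

Definition binom2 (l : nat) : int -> int -> CC :=
  fun a b => if (0 <= a) && (0 <= b) && (a + b == l%:Z)
             then ('C(l, `|a|%N))%:R else 0.

(* Y(u, x0 + x2) Y(v, x2) w, with (x0+x2)^m expanded in nonnegative powers
   of x2; coefficient of x0^a x2^b *)
Definition YYshift {V : lmodType CC} (Y : V -> V -> int -> V) (u v w : V)
  : int -> int -> V :=
  fun a b => \sum_(i \in [set: nat])
               (gbinom (a + i%:Z) i *: Y u (Y v w (b - i%:Z)) (a + i%:Z)).

Record nlva (V : lmodType CC) (Y : V -> V -> int -> V) (one : V) : Prop := {
  nlva_linl : forall (v : V) (n : int) (c : CC) (u1 u2 : V),
    Y (c *: u1 + u2) v n = c *: Y u1 v n + Y u2 v n;
  nlva_linr : forall (u : V) (n : int) (c : CC) (v1 v2 : V),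
    Y u (c *: v1 + v2) n = c *: Y u v1 n + Y u v2 n;
  nlva_trunc : forall u v : V, exists N : int, forall n, n < N -> Y u v n = 0;
  nlva_vac : forall (v : V) (n : int), Y one v n = if n == 0 then v else 0;
  nlva_create_neg : forall (v : V) (n : int), n < 0 -> Y v one n = 0;
  nlva_create_0 : forall v : V, Y v one 0 = v;
  nlva_wassoc : forall u v w : V, exists l : nat,
    mul2 (binom2 l) (YYshift Y u v w)
      = mul2 (binom2 l) (fun k n => Y (Y u v k) w n) }.

(* Y_W(u,x1) Y_W(v,x2) w ; coefficient of x1^m x2^l *)
Definition YYW {V W : lmodType CC} (YW : V -> W -> int -> W) (u v : V) (w : W)
  : int -> int -> W :=
  fun m l => YW u (YW v w l) m.

Definition in_hom2 {W : lmodType CC} (F : W -> int -> int -> W) : Prop :=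
  forall w : W, exists N : int, forall m n : int, (m < N \/ n < N) -> F w m n = 0.

Record phi_quasi_module (phi : nat -> int -> CC) (V : lmodType CC)
    (Y : V -> V -> int -> V) (one : V) (W : lmodType CC)
    (YW : V -> W -> int -> W) : Prop := {
  qm_linl : forall (w : W) (n : int) (c : CC) (u1 u2 : V),
    YW (c *: u1 + u2) w n = c *: YW u1 w n + YW u2 w n;
  qm_linr : forall (u : V) (n : int) (c : CC) (w1 w2 : W),
    YW u (c *: w1 + w2) n = c *: YW u w1 n + YW u w2 n;
  qm_trunc : forall (v : V) (w : W), exists N : int, forall n, n < N -> YW v w n = 0;
  qm_vac : forall (w : W) (n : int), YW one w n = if n == 0 then w else 0;
  qm_assoc : forall u v : V, exists p : nat -> nat -> CC,
    subst (W := CC^o) phi (natE2 p) <> (fun _ _ => 0) /\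
    in_hom2 (fun w => mul2 (natE2 p) (YYW YW u v w)) /\
    forall w : W,
      mul2 (subst (W := CC^o) phi (natE2 p)) (fun k n => YW (Y u v k) w n)
        = subst phi (mul2 (natE2 p) (YYW YW u v w)) }.

(* Main.v *)
Require Import Defs.
From mathcomp Require Import all_boot all_order all_algebra.
From mathcomp Require Import complex Rstruct.
From mathcomp Require Import boolp classical_sets functions cardinality fsbigop.
From mathcomp Require Import zify.
Set Implicit Arguments.
Unset Strict Implicit.
Unset Printing Implicit Defensive.
Import Order.TTheory GRing.Theory Num.Theory.
Local Open Scope classical_set_scope.
Local Open Scope ring_scope.


Definition zbox (N : nat) : seq int := [seq (i%:Z - N%:Z) | i <- iota 0 (N.*2.+1)].

Lemma mem_zbox N x : (x \in zbox N) = (`|x| <= N%:Z).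
Proof.
apply/mapP/idP; [case=> i | move=> h].
  by rewrite mem_iota => /andP[_ hi] ->; lia.
exists (absz (x + N%:Z)); first by rewrite mem_iota; lia.
lia.
Qed.

Lemma zbox_uniq N : uniq (zbox N).
Proof.
rewrite map_inj_uniq ?iota_uniq // => i j h; lia.
Qed.

Definition pbox (N : nat) : seq (int * int) :=
  [seq (x, y) | x <- zbox N, y <- zbox N].

Lemma mem_pbox N p : (p \in pbox N) = (`|p.1| <= N%:Z) && (`|p.2| <= N%:Z).
Proof.
case: p => x y; rewrite /pbox; apply/allpairsP/andP => [ [[a b] /=] | [h1 h2]].
  by rewrite !mem_zbox => -[h1 h2 [-> ->]].
by exists (x, y); rewrite /= !mem_zbox.
Qed.

Lemma pbox_uniq N : uniq (pbox N).
Proof.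
by apply: allpairs_uniq; rewrite ?zbox_uniq // => -[a b] [c d] _ _ [-> ->].
Qed.

Section Fsum.
Variable (T : choiceType) (W : lmodType CC).

Lemma fsum_seq (r : seq T) (F : T -> W) : uniq r ->
  (forall i, F i != 0 -> i \in r) ->
  \sum_(i \in [set: T]) F i = \sum_(i <- r) F i.
Proof.
move=> ur h; rewrite (fsbigE r) //.
  by apply: eq_bigl => i; rewrite in_setT.
move=> i _ ir; apply/eqP; exact: (contraNT (h i) ir).
Qed.

Lemma fsum_nz (A : set T) (F : T -> W) :
  \sum_(i \in A) F i != 0 -> exists i, F i != 0.
Proof.
apply: contraNP => h; apply/eqP/fsbig1 => i _.
by apply/eqP; apply: contra_notT h => nz; exists i.
Qed.

Lemma fsum_single (i0 : T) (F : T -> W) :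
  (forall i, i != i0 -> F i = 0) -> \sum_(i \in [set: T]) F i = F i0.
Proof.
move=> h; rewrite (fsum_seq (r := [:: i0])) ?big_seq1 //.
by move=> i; apply: contraR; rewrite inE => /h ->.
Qed.

Lemma fsumZr (A : set T) (a : CC) (F : T -> W) :
  a *: (\sum_(i \in A) F i) = \sum_(i \in A) a *: F i.
Proof.
have [->|a0] := eqVneq a 0.
  by rewrite scale0r fsbig1 // => i _; rewrite scale0r.
have -> : finite_support 0 A (fun i => a *: F i) = finite_support 0 A F.
  rewrite /finite_support !unlock.
  suff -> : (A `&` (fun i => a *: F i) @^-1` [set~ 0]) = (A `&` F @^-1` [set~ 0]) by [].
  apply/seteqP; split => i /=;
  rewrite /preimage /= => -[Ai h]; split=> //; move: h.
    by move=> h e; apply: h; rewrite e scaler0.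
  by move=> h /eqP; rewrite scaler_eq0 (negbTE a0) /= => /eqP.
by rewrite scaler_sumr.
Qed.

Lemma fsumZl (A : set T) (v : W) (F : T -> CC) :
  (\sum_(i \in A) F i) *: v = \sum_(i \in A) F i *: v.
Proof.
have [->|v0] := eqVneq v 0.
  by rewrite scaler0 fsbig1 // => i _; rewrite scaler0.
have -> : finite_support 0 A (fun i => F i *: v) = finite_support 0 A F.
  rewrite /finite_support !unlock.
  suff -> : (A `&` (fun i => F i *: v) @^-1` [set~ 0]) = (A `&` F @^-1` [set~ 0]) by [].
  apply/seteqP; split => i /=;
  rewrite /preimage /= => -[Ai h]; split=> //; move: h.
    by move=> h e; apply: h; rewrite e scale0r.
  by move=> h /eqP; rewrite scaler_eq0 (negbTE v0) orbF => /eqP.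
by rewrite scaler_suml.
Qed.

Lemma fsum_add (r : seq T) (F G : T -> W) : uniq r ->
  (forall i, F i != 0 -> i \in r) -> (forall i, G i != 0 -> i \in r) ->
  \sum_(i \in [set: T]) (F i + G i) =
  \sum_(i \in [set: T]) F i + \sum_(i \in [set: T]) G i.
Proof.
move=> ur hF hG; rewrite !(fsum_seq ur) ?big_split // => i.
apply: contraR => ir; move: (hF i) (hG i); rewrite (negbTE ir).
by move=> /contraFeq -> // /contraFeq -> //; rewrite addr0.
Qed.

Lemma fsum_sub (r : seq T) (F G : T -> W) : uniq r ->
  (forall i, F i != 0 -> i \in r) -> (forall i, G i != 0 -> i \in r) ->
  \sum_(i \in [set: T]) (F i - G i) =
  \sum_(i \in [set: T]) F i - \sum_(i \in [set: T]) G i.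
Proof.
move=> ur hF hG; rewrite (fsum_add ur hF); last first.
  by move=> i; rewrite oppr_eq0; apply: hG.
congr (_ + _); rewrite !(fsum_seq ur) ?sumrN // => i.
by rewrite oppr_eq0; apply: hG.
Qed.

End Fsum.

Lemma fsum_exch (I J : choiceType) (W : lmodType CC) (r : seq I) (s : seq J)
  (F : I -> J -> W) : uniq r -> uniq s ->
  (forall i j, F i j != 0 -> i \in r /\ j \in s) ->
  \sum_(i \in [set: I]) \sum_(j \in [set: J]) F i j =
  \sum_(j \in [set: J]) \sum_(i \in [set: I]) F i j.
Proof.
move=> ur us h.
rewrite (fsum_seq ur); last by move=> i /fsum_nz [j /h []].
under eq_bigr => i _ do rewrite (fsum_seq us (fun j (hj : F i j != 0) => proj2 (h i j hj))).
rewrite exchange_big /=; apply/esym.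
rewrite (fsum_seq us); last by move=> j /fsum_nz [i /h []].
apply: eq_bigr => j _; rewrite (fsum_seq ur) // => i hi; exact: (proj1 (h i j hi)).
Qed.


Section Mul2.
Variable W : lmodType CC.

Lemma mul2E_seq (f : int -> int -> CC) (g : int -> int -> W) k n N :
  (forall p : int * int, f p.1 p.2 != 0 -> g (k - p.1) (n - p.2) != 0 ->
     p \in pbox N) ->
  mul2 f g k n = \sum_(p <- pbox N) f p.1 p.2 *: g (k - p.1) (n - p.2).
Proof.
move=> h; rewrite /mul2 (fsum_seq (pbox_uniq N)) // => p.
by rewrite scaler_eq0 negb_or => /andP[]; apply: h.
Qed.

Lemma mul2A (f g : int -> int -> CC) (h : int -> int -> W) k n N :
 (forall p q : int * int, f p.1 p.2 != 0 -> g q.1 q.2 != 0 ->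
    h (k - p.1 - q.1) (n - p.2 - q.2) != 0 ->
    p \in pbox N /\ (p.1 + q.1, p.2 + q.2) \in pbox N) ->
 mul2 f (mul2 g h) k n = mul2 (mul2 (W := CC^o) f g) h k n.
Proof.
move=> H; rewrite /mul2.
under eq_fsbigr => p _ do rewrite fsumZr.
under [RHS]eq_fsbigr => s _ do rewrite fsumZl.
rewrite [RHS](fsum_exch (pbox_uniq N) (pbox_uniq N)); last first.
  move=> s p; rewrite -scalerA !scaler_eq0 !negb_or => /and3P[h1 h2 h3].
  have := H p (s.1 - p.1, s.2 - p.2) h1 h2.
  have -> : k - p.1 - (s.1 - p.1) = k - s.1 by lia.
  have -> : n - p.2 - (s.2 - p.2) = n - s.2 by lia.
  move=> /(_ h3) [-> /=].
  have -> : p.1 + (s.1 - p.1) = s.1 by lia.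
  have -> : p.2 + (s.2 - p.2) = s.2 by lia.
  by case: s {h2 h3} => a b.
apply: eq_fsbigr => p _; apply/esym.
rewrite (reindex_fsbigT (fun q : int * int => (p.1 + q.1, p.2 + q.2))); last first.
  exists (fun q : int * int => (q.1 - p.1, q.2 - p.2)) => -[a b] /=; congr pair; lia.
apply: eq_fsbigr => q _ /=.
have -> : p.1 + q.1 - p.1 = q.1 by lia.
have -> : p.2 + q.2 - p.2 = q.2 by lia.
have -> : k - (p.1 + q.1) = k - p.1 - q.1 by lia.
have -> : n - (p.2 + q.2) = n - p.2 - q.2 by lia.
by rewrite scalerA.
Qed.

Lemma mul2_one (g : int -> int -> W) : mul2 one2 g = g.
Proof.
apply/funext => k; apply/funext => n; rewrite /mul2 (@fsum_single _ _ (0, 0)).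
  by rewrite /one2 /= scale1r !subr0.
move=> [a b] /=; rewrite /one2 /= => hne.
suff -> : ((a == 0) && (b == 0)) = false by rewrite scale0r.
by apply: contraNF hne => /andP[/eqP -> /eqP ->].
Qed.

Lemma mul2_sub (f : int -> int -> CC) (g1 g2 : int -> int -> W) k n N :
  (forall p : int * int, f p.1 p.2 != 0 -> g1 (k - p.1) (n - p.2) != 0 ->
     p \in pbox N) ->
  (forall p : int * int, f p.1 p.2 != 0 -> g2 (k - p.1) (n - p.2) != 0 ->
     p \in pbox N) ->
  mul2 f (fun a b => g1 a b - g2 a b) k n = mul2 f g1 k n - mul2 f g2 k n.
Proof.
move=> h1 h2; rewrite /mul2 -(fsum_sub (pbox_uniq N)).
- by apply: eq_fsbigr => p _; rewrite scalerBr.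
- by move=> p; rewrite scaler_eq0 negb_or => /andP[]; apply: h1.
- by move=> p; rewrite scaler_eq0 negb_or => /andP[]; apply: h2.
Qed.

End Mul2.

Lemma mul2C (f g : int -> int -> CC) :
  mul2 (W := CC^o) f g = mul2 (W := CC^o) g f.
Proof.
apply/funext => k; apply/funext => n; rewrite /mul2.
rewrite (reindex_fsbigT (fun p : int * int => (k - p.1, n - p.2))); last first.
  exists (fun p : int * int => (k - p.1, n - p.2)) => -[a b] /=; congr pair; lia.
apply: eq_fsbigr => -[a b] _ /=.
have -> : k - (k - a) = a by lia.
have -> : n - (n - b) = b by lia.
exact: mulrC.
Qed.

Lemma mul2_one_r (f : int -> int -> CC) : mul2 (W := CC^o) f one2 = f.
Proof. by rewrite mul2C mul2_one. Qed.


Definition lob (lo : int -> int) (R : nat) : int := - \sum_(i <- zbox R) `|lo i|.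

Lemma lobP lo R x : `|x| <= R%:Z -> lob lo R <= lo x.
Proof.
move=> hx; have xin : x \in zbox R by rewrite mem_zbox.
have : `|lo x| <= \sum_(i <- zbox R) `|lo i|.
  by rewrite (bigD1_seq x) ?zbox_uniq // lerDl sumr_ge0.
by rewrite /lob; apply: lerNnormlW.
Qed.

Definition lowb {T : zmodType} (f : int -> int -> T) :=
  exists K : int, exists lo : int -> int,
    forall k n, f k n != 0 -> K <= k /\ lo k <= n.

Definition tr {T : Type} (f : int -> int -> T) := fun k n => f n k.

Lemma pair_fin (T1 T2 : zmodType) (f : int -> int -> T1) (g : int -> int -> T2) k n :
  lowb f -> lowb g -> exists N, forall p : int * int,
    f p.1 p.2 != 0 -> g (k - p.1) (n - p.2) != 0 -> p \in pbox N.
Proof.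
move=> [K1 [lo1 h1]] [K2 [lo2 h2]].
pose R := (absz K1 + absz K2 + absz k)%N.
exists (R + absz (lob lo1 R) + absz (n - lob lo2 R))%N => -[a b] /= /h1 [ha hb] /h2 [hc hd].
have e1 : lob lo1 R <= lo1 a by apply: lobP; rewrite /R; lia.
have e2 : lob lo2 R <= lo2 (k - a) by apply: lobP; rewrite /R; lia.
rewrite mem_pbox /=; lia.
Qed.

Lemma trip_fin (T1 T2 T3 : zmodType) (f : int -> int -> T1) (g : int -> int -> T2)
  (h : int -> int -> T3) k n :
  lowb f -> lowb g -> lowb h -> exists N, forall p q : int * int,
    f p.1 p.2 != 0 -> g q.1 q.2 != 0 -> h (k - p.1 - q.1) (n - p.2 - q.2) != 0 ->
    p \in pbox N /\ (p.1 + q.1, p.2 + q.2) \in pbox N.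
Proof.
move=> [K1 [lo1 h1]] [K2 [lo2 h2]] [K3 [lo3 h3]].
pose R := (3 * (absz K1 + absz K2 + absz K3 + absz k))%N.
pose L1 := lob lo1 R; pose L2 := lob lo2 R; pose L3 := lob lo3 R.
exists (3 * (R + absz L1 + absz L2 + absz L3 + absz n))%N.
move=> [a1 a2] [b1 b2] /= /h1 [? ?] /h2 [? ?] /h3 [? ?].
have : L1 <= lo1 a1 by apply: lobP; rewrite /R; lia.
have : L2 <= lo2 b1 by apply: lobP; rewrite /R; lia.
have : L3 <= lo3 (k - a1 - b1) by apply: lobP; rewrite /R; lia.
move=> e3 e2 e1.
rewrite !mem_pbox /=; split; apply/andP; split.
- lia.
- lia.
- lia.
- lia.
Qed.

Lemma trip_finT (T1 T2 T3 : zmodType) (f : int -> int -> T1) (g : int -> int -> T2)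
  (h : int -> int -> T3) k n :
  lowb (tr f) -> lowb (tr g) -> lowb (tr h) -> exists N, forall p q : int * int,
    f p.1 p.2 != 0 -> g q.1 q.2 != 0 -> h (k - p.1 - q.1) (n - p.2 - q.2) != 0 ->
    p \in pbox N /\ (p.1 + q.1, p.2 + q.2) \in pbox N.
Proof.
move=> hf hg hh; have [N HN] := trip_fin n k hf hg hh.
exists N => [[a1 a2] [b1 b2]] /= h1 h2 h3.
have := HN (a2, a1) (b2, b1) h1 h2 h3.
by rewrite !mem_pbox /= => -[/andP[-> ->] /andP[-> ->]].
Qed.

Lemma lowb_mul2 (W : lmodType CC) (f : int -> int -> CC) (g : int -> int -> W) :
  lowb f -> lowb g -> lowb (mul2 f g).
Proof.
move=> [K1 [lo1 h1]] [K2 [lo2 h2]].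
exists (K1 + K2), (fun k => lob lo1 (absz K1 + absz K2 + absz k)
                           + lob lo2 (absz K1 + absz K2 + absz k)) => k n.
rewrite /mul2 => /fsum_nz [[a b]] /=.
rewrite scaler_eq0 negb_or => /andP[/h1 [? ?] /h2 [? ?]].
have : lob lo1 (absz K1 + absz K2 + absz k) <= lo1 a by apply: lobP; lia.
have : lob lo2 (absz K1 + absz K2 + absz k) <= lo2 (k - a) by apply: lobP; lia.
lia.
Qed.

Lemma lowb_add (T : zmodType) (f g : int -> int -> T) :
  lowb f -> lowb g -> lowb (fun k n => f k n + g k n).
Proof.
move=> [K1 [lo1 h1]] [K2 [lo2 h2]].
exists (- (`|K1| + `|K2|)), (fun k => - (`|lo1 k| + `|lo2 k|)) => k n h.
have [hf|hf] := eqVneq (f k n) 0.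
  by move: h; rewrite hf add0r => /h2; lia.
by move: hf => /h1; lia.
Qed.

Lemma lowb_opp (T : zmodType) (f : int -> int -> T) :
  lowb f -> lowb (fun k n => - f k n).
Proof.
by move=> [K [lo h]]; exists K, lo => k n; rewrite oppr_eq0; apply: h.
Qed.

Lemma lowb_sub (T : zmodType) (f g : int -> int -> T) :
  lowb f -> lowb g -> lowb (fun k n => f k n - g k n).
Proof. by move=> hf hg; apply: lowb_add hf (lowb_opp hg). Qed.


Lemma ord_big_nz (T : zmodType) (K : nat) (F : 'I_K -> T) :
  \sum_(j < K) F j != 0 -> exists j : 'I_K, F j != 0.
Proof.
apply: contraNP => h; apply/eqP/big1 => j _; apply/eqP.
by apply: contra_notT h => nz; exists j.
Qed.

Definition gfun (L : nat -> int) (k : int) : int :=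
  - ((absz k * \sum_(i < (absz k).+1) absz (L i - 1))%N)%:Z.

Lemma Gmono (L : nat -> int) (a b : nat) : (a <= b)%N ->
  (\sum_(i < a.+1) absz (L i - 1) <= \sum_(i < b.+1) absz (L i - 1))%N.
Proof.
move=> /subnK <-; elim: (b - a)%N => [|c IH]; first by rewrite add0n.
by rewrite addSn [X in (_ <= X)%N]big_ord_recr /=; apply: leq_trans IH (leq_addr _ _).
Qed.

Lemma Gterm (L : nat -> int) (a : nat) :
  (absz (L a - 1) <= \sum_(i < a.+1) absz (L i - 1))%N.
Proof. by rewrite big_ord_recr /= leq_addl. Qed.

Lemma exists_g (phi : nat -> int -> CC) : associate phi ->
  exists g : int -> int, g 0 = 0 /\
    (forall a b, 0 <= a -> 0 <= b -> g (a + b) <= g a + g b) /\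
    (forall k n, phiE phi k n != 0 -> 0 <= k /\ 1 + g k <= n).
Proof.
move=> hphi.
have [L hL] : exists L : nat -> int, forall k n, phi k n != 0 -> L k <= n.
  have /choice [L hL] := assoc_laurent hphi.
  exists L => k n; apply: contraR; rewrite -ltNge => h; apply/eqP/hL.
  by [].
exists (gfun L); split; first by rewrite /gfun.
split.
  move=> a b ha hb; rewrite /gfun.
  have e : absz (a + b) = (absz a + absz b)%N by lia.
  rewrite e.
  have h1 := Gmono L (leq_addr (absz b) (absz a)).
  have h2 := Gmono L (leq_addl (absz a) (absz b)).
  set GA := (\sum_(i < (absz a).+1) _)%N in h1 *.
  set GB := (\sum_(i < (absz b).+1) _)%N in h2 *.
  set GC := (\sum_(i < (absz a + absz b).+1) _)%N in h1 h2 *.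
  have : (absz a * GA + absz b * GB <= (absz a + absz b) * GC)%N.
    by rewrite mulnDl leq_add // leq_mul.
  lia.
move=> k n; rewrite /phiE; case: k => [k|k] /= h; last by rewrite eqxx in h.
split => //.
case: k h => [|k] h.
  move: h; rewrite (assoc_init hphi); case: (n =P 1) => [-> _|_] /=.
    by rewrite /gfun.
  by rewrite eqxx.
have := hL _ _ h; have := Gterm L k.+1; rewrite /gfun /=.
set G := (\sum_(i < k.+2) _)%N => hG hLn.
have : (G <= k.+1 * G)%N by rewrite leq_pmull.
lia.
Qed.

Section Bd.
Variable g : int -> int.
Hypothesis g0 : g 0 = 0.
Hypothesis gs : forall a b, 0 <= a -> 0 <= b -> g (a + b) <= g a + g b.

Definition Bd (e o : int) (f : int -> int -> CC) :=
  forall k n, f k n != 0 -> o <= k /\ e + g k <= n.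

Lemma Bd_lowb e o f : Bd e o f -> lowb f.
Proof. by move=> h; exists o, (fun k => e + g k). Qed.

Lemma Bd_mul2 e1 o1 e2 o2 f h : 0 <= o1 -> 0 <= o2 -> Bd e1 o1 f -> Bd e2 o2 h ->
  Bd (e1 + e2) (o1 + o2) (mul2 (W := CC^o) f h).
Proof.
move=> ho1 ho2 hf hh k n; rewrite /mul2 => /fsum_nz [[a b]] /=.
rewrite scaler_eq0 negb_or => /andP[/hf [? ?] /hh [? ?]].
have := gs (a := a) (b := k - a).
have -> : a + (k - a) = k by lia.
move=> /(_ ltac:(lia) ltac:(lia)); lia.
Qed.

Lemma Bd_one2 : Bd 0 0 one2.
Proof.
move=> k n; rewrite /one2.
have [->|hk] := eqVneq k 0; have [->|hn] := eqVneq n 0.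
- by rewrite g0.
all: by rewrite /= ?mulr0n ?eqxx.
Qed.

Lemma Bd_iter e o f m : 0 <= o -> Bd e o f ->
  Bd (e * m%:Z) (o * m%:Z) (iter m (mul2 (W := CC^o) f) one2).
Proof.
move=> ho hf; elim: m => [|m IH] /=; first by rewrite !mulr0; exact: Bd_one2.
have -> : e * m.+1%:Z = e + e * m%:Z by lia.
have -> : o * m.+1%:Z = o + o * m%:Z by lia.
by apply: Bd_mul2 => //; lia.
Qed.

End Bd.


Lemma pbox_mono N M p : (N <= M)%N -> p \in pbox N -> p \in pbox M.
Proof. by rewrite !mem_pbox => h; lia. Qed.

Lemma common_N (P : nat -> nat -> Prop) K :
  (forall j, (j < K)%N -> exists N, P j N) ->
  (forall j N M, (N <= M)%N -> P j N -> P j M) ->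
  exists N, forall j, (j < K)%N -> P j N.
Proof.
move=> h hm; elim: K h => [|K IH] h; first by exists 0%N.
have [N1 H1] := IH (fun j hj => h j (ltnW hj)).
have [N2 H2] := h K (ltnSn K).
exists (maxn N1 N2) => j; rewrite ltnS leq_eqVlt => /orP[/eqP ->|hj].
  by apply: hm H2; rewrite leq_maxr.
by apply: hm (H1 j hj); rewrite leq_maxl.
Qed.

Lemma fsum_big (T : choiceType) (W : lmodType CC) (r : seq T) K (F : nat -> T -> W) :
  uniq r -> (forall j i, (j < K)%N -> F j i != 0 -> i \in r) ->
  \sum_(i \in [set: T]) \sum_(j < K) F j i = \sum_(j < K) \sum_(i \in [set: T]) F j i.
Proof.
move=> ur h; rewrite (fsum_seq ur); last first.
  by move=> i /ord_big_nz [j /(h j i (ltn_ord j))].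
rewrite exchange_big /=; apply: eq_bigr => j _; rewrite (fsum_seq ur) //.
by move=> i /(h j i (ltn_ord j)).
Qed.

Lemma mul2_addl (W : lmodType CC) (f1 f2 : int -> int -> CC) (h : int -> int -> W) k n N :
  (forall p : int * int, f1 p.1 p.2 != 0 -> h (k - p.1) (n - p.2) != 0 ->
     p \in pbox N) ->
  (forall p : int * int, f2 p.1 p.2 != 0 -> h (k - p.1) (n - p.2) != 0 ->
     p \in pbox N) ->
  mul2 (fun a b => f1 a b + f2 a b) h k n = mul2 f1 h k n + mul2 f2 h k n.
Proof.
move=> h1 h2; rewrite /mul2 -(fsum_add (pbox_uniq N)).
- by apply: eq_fsbigr => p _; rewrite scalerDl.
- by move=> p; rewrite scaler_eq0 negb_or => /andP[]; apply: h1.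
- by move=> p; rewrite scaler_eq0 negb_or => /andP[]; apply: h2.
Qed.

Lemma tele (t : nat -> CC) m :
  \sum_(j < m) t j + \sum_(j < m) - t j.+1 = t 0%N - t m.
Proof.
elim: m => [|m IH]; first by rewrite !big_ord0 addr0 subrr.
by rewrite !big_ord_recr /= addrACA IH addrA subrK.
Qed.

Lemma lowb_xser2 : lowb xser2.
Proof.
exists 0, (fun _ => 1) => k n; rewrite /xser2.
by have [->|hk] := eqVneq k 0; have [->|hn] := eqVneq n 1; rewrite /= ?mulr0n ?eqxx.
Qed.

Section Phi.
Variable phi : nat -> int -> CC.
Hypothesis hphi : associate phi.
Variable g : int -> int.
Hypothesis g0 : g 0 = 0.
Hypothesis gs : forall a b, 0 <= a -> 0 <= b -> g (a + b) <= g a + g b.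
Hypothesis gphi : forall k n, phiE phi k n != 0 -> 0 <= k /\ 1 + g k <= n.

Lemma Bd_phiE : Bd g 1 0 (phiE phi).
Proof. exact: gphi. Qed.

Lemma Bd_phipow m : Bd g m%:Z 0 (phipow phi m).
Proof.
have := Bd_iter g0 gs (m := m) (lexx 0) Bd_phiE; rewrite mul1r mul0r.
by [].
Qed.

Lemma Bd_phid : Bd g 1 1 (phid phi).
Proof.
move=> k n; rewrite /phid.
have [->|hk] := eqVneq k 0.
  by rewrite /phiE /xser2 /= (assoc_init hphi) subrr eqxx.
have -> : xser2 k n = 0 by rewrite /xser2 (negbTE hk).
rewrite subr0 => /gphi [? ?]; lia.
Qed.

Lemma Bd_dpow j : Bd g j%:Z j%:Z (dpow phi j).
Proof.
have := Bd_iter g0 gs (m := j) ler01 Bd_phid; rewrite !mul1r.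
by [].
Qed.

Lemma dpow_small j k n : k < j%:Z -> dpow phi j k n = 0.
Proof.
move=> h; apply/eqP; apply: contraTT h => /Bd_dpow [h _]; lia.
Qed.

Lemma Bd_phiinv : Bd g (-1) 0 (phiinv phi).
Proof.
move=> k n; rewrite /phiinv; case: k => [k|k] /=; last by rewrite eqxx.
move=> /ord_big_nz [j]; rewrite mulf_eq0 negb_or => /andP[_ /Bd_dpow].
lia.
Qed.

Lemma Bd_phipowz m : Bd g m 0 (phipowz phi m).
Proof.
case: m => [m|m] /=; first exact: Bd_phipow.
have := Bd_iter g0 gs (m := m.+1) (lexx 0) Bd_phiinv; rewrite mul0r NegzE.
by have -> : -1 * m.+1%:Z = - m.+1%:Z by lia.
Qed.

Lemma phiinv_ext (M : nat) k n : k <= M%:Z ->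
  phiinv phi k n = \sum_(j < M.+1) (-1) ^+ j * dpow phi j k (n + (j.+1)%:Z).
Proof.
rewrite /phiinv; case: k => [k|k] /= hk; last first.
  by apply/esym/big1 => j _; rewrite dpow_small ?mulr0 //; lia.
rewrite (big_ord_widen _ (fun j => (-1) ^+ j * dpow phi j k (n + (j.+1)%:Z)) 
   (_ : (k.+1 <= M.+1)%N)); last by lia.
rewrite big_mkcond /=; apply: eq_bigr => j _; case: ifP => // hj.
by rewrite dpow_small ?mulr0 //; lia.
Qed.


Lemma phi_inv : mul2 (W := CC^o) (phiE phi) (phiinv phi) = one2.
Proof.
apply/funext => k; apply/funext => n.
have -> : phiE phi = fun a b => xser2 a b + phid phi a b.
  by apply/funext => a; apply/funext => b; rewrite /phid addrC subrK.
have [N1 H1] := pair_fin k n lowb_xser2 (Bd_lowb Bd_phiinv).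
have [N2 H2] := pair_fin k n (Bd_lowb Bd_phid) (Bd_lowb Bd_phiinv).
rewrite (mul2_addl (N := maxn N1 N2)); first last.
- by move=> p a b; apply: pbox_mono (H2 p a b); rewrite leq_maxr.
- by move=> p a b; apply: pbox_mono (H1 p a b); rewrite leq_maxl.
have -> : mul2 (W := CC^o) xser2 (phiinv phi) k n = phiinv phi k (n - 1).
  rewrite /mul2 (@fsum_single _ _ (0, 1)).
    by rewrite /xser2 /= scale1r subr0.
  move=> [a b] /= hne; rewrite /xser2.
  suff -> : ((a == 0) && (b == 1)) = false by rewrite scale0r.
  by apply: contraNF hne => /andP[/eqP -> /eqP ->].
clear H1 H2; case: k => [K|K]; last first.
  rewrite /one2 /= add0r; apply/eqP; apply: contraTT isT.
  by move=> /(Bd_mul2 g0 gs ler01 (lexx 0) Bd_phid Bd_phiinv) [h _]; lia.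
pose t := fun j : nat => (-1) ^+ j * dpow phi j K (n + j%:Z).
have e1 : phiinv phi K (n - 1) = \sum_(j < K.+1) t j.
  rewrite /phiinv /=; apply: eq_bigr => j _; rewrite /t.
  by have -> : n - 1 + (j.+1)%:Z = n + j%:Z by lia.
have e2 : mul2 (W := CC^o) (phid phi) (phiinv phi) K n =
          \sum_(j < K.+1) - t j.+1.
  rewrite /mul2.
  transitivity (\sum_(p \in [set: int * int]) \sum_(j < K.+1)
     ((-1) ^+ j * (phid phi p.1 p.2 * dpow phi j (K%:Z - p.1) (n + (j.+1)%:Z - p.2)))).
    apply: eq_fsbigr => -[a b] _ /=.
    have [->|hd] := eqVneq (phid phi a b) 0.
      by rewrite scale0r big1 // => j _; rewrite mul0r mulr0.
    have [ha _] := Bd_phid hd.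
    rewrite (phiinv_ext (M := K)); last by lia.
    rewrite scaler_sumr; apply: eq_bigr => j _ /=.
    have -> : n - b + (j.+1)%:Z = n + (j.+1)%:Z - b by lia.
    by rewrite mulrCA.
  have [N HN] := @common_N (fun j N => forall p : int * int,
       phid phi p.1 p.2 != 0 -> dpow phi j (K%:Z - p.1) (n + (j.+1)%:Z - p.2) != 0 ->
       p \in pbox N) K.+1
     (fun j _ => pair_fin K (n + (j.+1)%:Z) (Bd_lowb Bd_phid) (Bd_lowb (@Bd_dpow j)))
     (fun j N M hNM h p a b => pbox_mono hNM (h p a b)).
  rewrite (@fsum_big _ _ _ K.+1 (fun (j : nat) (p : int * int) => (-1) ^+ j * (phid phi p.1 p.2 * dpow phi j (K%:Z - p.1) (n + (j.+1)%:Z - p.2))) (pbox_uniq N)); last first.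
    move=> j p hj; rewrite !mulf_eq0 !negb_or => /and3P[_ ha hb].
    exact: HN hj p ha hb.
  apply: eq_bigr => j _; rewrite /t -fsumZr exprS mulN1r mulNr opprK.
  by [].
rewrite e1 e2 tele.
have -> : t K.+1 = 0 by rewrite /t dpow_small ?mulr0 //; lia.
by rewrite subr0 /t expr0 mul1r addr0.
Qed.


Lemma phipowzS m :
  phipowz phi (m + 1) = mul2 (W := CC^o) (phiE phi) (phipowz phi m).
Proof.
case: m => [m|[|m]].
- by have -> : Posz m + 1 = Posz m.+1 by lia.
- have -> : Negz 0 + 1 = 0 by [].
  by rewrite /phipowz /= mul2_one_r phi_inv.
- have -> : Negz m.+1 + 1 = Negz m by rewrite !NegzE; lia.
  rewrite /phipowz iterS; apply/funext => k; apply/funext => n.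
  have [N HN] := trip_fin k n (Bd_lowb Bd_phiE) (Bd_lowb Bd_phiinv)
     (Bd_lowb (@Bd_phipowz (Negz m))).
  by rewrite (mul2A HN) phi_inv mul2_one.
Qed.

Lemma phipowz_add (a : nat) m :
  phipowz phi (a%:Z + m) = mul2 (W := CC^o) (phipow phi a) (phipowz phi m).
Proof.
elim: a => [|a IH]; first by rewrite add0r mul2_one.
have -> : a.+1%:Z + m = (a%:Z + m) + 1 by lia.
rewrite phipowzS IH; apply/funext => k; apply/funext => n.
have [N HN] := trip_fin k n (Bd_lowb Bd_phiE) (Bd_lowb (@Bd_phipow a))
     (Bd_lowb (@Bd_phipowz m)).
by rewrite (mul2A HN).
Qed.

End Phi.


Definition homb {T : zmodType} (N : int) (F : int -> int -> T) :=
  forall m l, F m l != 0 -> N <= m /\ N <= l.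

Lemma natE2_nz (s : nat -> nat -> CC) a b : natE2 s a b != 0 -> 0 <= a /\ 0 <= b.
Proof. by case: a => [a|a]; case: b => [b|b] /=; rewrite ?eqxx. Qed.

Section Subst.
Variable phi : nat -> int -> CC.
Hypothesis hphi : associate phi.
Variable g : int -> int.
Hypothesis g0 : g 0 = 0.
Hypothesis gs : forall a b, 0 <= a -> 0 <= b -> g (a + b) <= g a + g b.
Hypothesis gphi : forall k n, phiE phi k n != 0 -> 0 <= k /\ 1 + g k <= n.

Lemma lowb_subst (W : lmodType CC) (F : int -> int -> W) N :
  homb N F -> lowb (subst phi F).
Proof.
move=> hF; exists 0, (fun k => 2 * N + g k) => k n.
rewrite /subst => /fsum_nz [[m l]] /=; rewrite scaler_eq0 negb_or.
move=> /andP[/(Bd_phipowz hphi g0 gs gphi) [? ?] /hF [? ?]]; lia.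
Qed.

Lemma subst_mul (W : lmodType CC) (s : nat -> nat -> CC) (F : int -> int -> W) N :
  homb N F ->
  subst phi (mul2 (natE2 s) F) =
  mul2 (subst (W := CC^o) phi (natE2 s)) (subst phi F).
Proof.
move=> hF; apply/funext => k; apply/funext => n.
pose S := natE2 s.
pose Phi := phipowz phi.
have BP : forall m, Bd g m 0 (Phi m) := Bd_phipowz hphi g0 gs gphi.
pose T := fun (a nu c : int * int) =>
  (Phi a.1 c.1 c.2 * Phi nu.1 (k - c.1) (n - a.2 - nu.2 - c.2) * S a.1 a.2)
    *: F nu.1 nu.2.
transitivity (\sum_(a \in [set: int * int]) \sum_(nu \in [set: int * int])
                \sum_(c \in [set: int * int]) T a nu c).
  rewrite /subst /mul2.
  under eq_fsbigr => mu _ do rewrite fsumZr.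
  pose R1 := (2 * (absz N + absz (n - g k - N)%R))%N.
  rewrite (fsum_exch (pbox_uniq R1) (pbox_uniq R1)); last first.
    move=> [m1 m2] [a1 a2] /=; rewrite !scaler_eq0 !negb_or => /and3P[h1 h2 h3].
    have [_ e1] := BP _ _ _ h1.
    have [e2 e3] := natE2_nz h2.
    have [e4 e5] := hF _ _ h3.
    rewrite !mem_pbox /R1 /=; lia.
  apply: eq_fsbigr => a _.
  rewrite (reindex_fsbigT (fun nu : int * int => (a.1 + nu.1, a.2 + nu.2))); last first.
    exists (fun q : int * int => (q.1 - a.1, q.2 - a.2)) => -[x y] /=; congr pair; lia.
  have [Sa0|Sa] := eqVneq (S a.1 a.2) 0.
    rewrite fsbig1; last by move=> nu _; rewrite -/S Sa0 scale0r scaler0.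
    apply/esym/fsbig1 => nu _; apply/fsbig1 => c _.
    by rewrite /T Sa0 mulr0 scale0r.
  have [ha1 ha2] := natE2_nz Sa.
  apply: eq_fsbigr => nu _ /=.
  have -> : a.1 + nu.1 - a.1 = nu.1 by lia.
  have -> : a.2 + nu.2 - a.2 = nu.2 by lia.
  have [a' ea] : exists a' : nat, a.1 = a'%:Z by exists (absz a.1); lia.
  rewrite ea (phipowz_add hphi g0 gs gphi) /mul2 fsumZl.
  apply: eq_fsbigr => c _; rewrite /T ea scalerA.
  have -> : n - (a.2 + nu.2) - c.2 = n - a.2 - nu.2 - c.2 by lia.
  by rewrite -/S -/Phi.
pose T' := fun (b a nu : int * int) =>
  ((Phi a.1 b.1 (b.2 - a.2) * S a.1 a.2) * Phi nu.1 (k - b.1) (n - b.2 - nu.2))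
    *: F nu.1 nu.2.
transitivity (\sum_(b \in [set: int * int]) \sum_(a \in [set: int * int])
                \sum_(nu \in [set: int * int]) T' b a nu); last first.
  rewrite /mul2 /subst; apply: eq_fsbigr => b _; rewrite fsumZl.
  apply: eq_fsbigr => a _; rewrite fsumZr; apply: eq_fsbigr => nu _.
  by rewrite scalerA.
pose Gm := lob g (absz k).
pose R2 := (4 * (absz k + absz N + absz n + absz Gm))%N.
have supp : forall b a nu, T' b a nu != 0 ->
    b \in pbox R2 /\ a \in pbox R2 /\ nu \in pbox R2.
  move=> [b1 b2] [a1 a2] [nu1 nu2]; rewrite /T' /=.
  rewrite scaler_eq0 !mulf_eq0 !negb_or => /andP[/andP[/andP[h1 h2] h3] h4].
  have [e1 e2] := BP _ _ _ h1.
  have [e3 e4] := BP _ _ _ h3.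
  have [e5 e6] := natE2_nz h2.
  have [e7 e8] := hF _ _ h4.
  have e9 : Gm <= g b1 by apply: lobP; lia.
  have e10 : Gm <= g (k - b1) by apply: lobP; lia.
  rewrite !mem_pbox /R2 /=; lia.
apply/esym; rewrite (fsum_exch (pbox_uniq R2) (pbox_uniq R2)); last first.
  by move=> b a /fsum_nz [nu /supp [? [? _]]].
apply: eq_fsbigr => a _.
rewrite (fsum_exch (pbox_uniq R2) (pbox_uniq R2)); last first.
  by move=> b nu /supp [? [_ ?]].
apply: eq_fsbigr => nu _.
rewrite (reindex_fsbigT (fun c : int * int => (c.1, c.2 + a.2))); last first.
  exists (fun q : int * int => (q.1, q.2 - a.2)) => -[x y] /=; congr pair; lia.
apply: eq_fsbigr => c _; rewrite /T /T' /=.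
have -> : c.2 + a.2 - a.2 = c.2 by lia.
have -> : n - (c.2 + a.2) - nu.2 = n - a.2 - nu.2 - c.2 by lia.
by rewrite mulrAC.
Qed.

End Subst.


Lemma int_min (Q : int -> Prop) K : (forall k, Q k -> K <= k) -> (exists k, Q k) ->
  exists k0, Q k0 /\ forall k, Q k -> k0 <= k.
Proof.
move=> hK [k hk].
have ex : exists j : nat, `[< Q (K + j%:Z) >].
  exists (absz (k - K)); apply/asboolP.
  by have -> : K + (absz (k - K))%:Z = k by have := hK _ hk; lia.
case: (ex_minnP ex) => j /asboolP hj hmin.
exists (K + j%:Z); split => // k' hk'.
have hk'K := hK _ hk'.
have : (j <= absz (k' - K))%N.
  apply: hmin; apply/asboolP.
  by have -> : K + (absz (k' - K))%:Z = k' by lia.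
lia.
Qed.

Lemma cancel2 (W : lmodType CC) (P : int -> int -> CC) (X : int -> int -> W) :
  lowb P -> lowb X -> P <> (fun _ _ => 0) -> (forall k n, mul2 P X k n = 0) ->
  forall k n, X k n = 0.
Proof.
move=> [KP [loP hlP]] [KX [loX hlX]] hP hPX k n.
apply/eqP; apply: contraT => hX.
have [k1' [n1' hP1]] : exists k n, P k n != 0.
  case: (pselect (exists k n, P k n != 0)) => // h; exfalso; apply: hP.
  apply/funext => a; apply/funext => b; apply/eqP; apply/negPn/negP => nz.
  by apply: h; exists a, b.
have [k0 [[n0' h0] hk0]] := @int_min (fun k => exists n, X k n != 0) KX
  (fun k '(ex_intro n hn) => proj1 (hlX _ _ hn)) (ex_intro _ k (ex_intro _ n hX)).
have [n0 [hn0 hn0m]] := @int_min (fun n => X k0 n != 0) (loX k0)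
  (fun n hn => proj2 (hlX _ _ hn)) (ex_intro _ n0' h0).
have [k1 [[n2' h1] hk1]] := @int_min (fun k => exists n, P k n != 0) KP
  (fun k '(ex_intro n hn) => proj1 (hlP _ _ hn)) (ex_intro _ k1' (ex_intro _ n1' hP1)).
have [n1 [hn1 hn1m]] := @int_min (fun n => P k1 n != 0) (loP k1)
  (fun n hn => proj2 (hlP _ _ hn)) (ex_intro _ n2' h1).
have := hPX (k0 + k1) (n0 + n1); rewrite /mul2 (@fsum_single _ _ (k1, n1)) /=.
  have -> : k0 + k1 - k1 = k0 by lia.
  have -> : n0 + n1 - n1 = n0 by lia.
  by move/eqP; rewrite scaler_eq0 (negbTE hn1) (negbTE hn0).
move=> [a b] hab /=; apply/eqP; rewrite scaler_eq0; apply/negPn/negP.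
rewrite negb_or => /andP[ha hb].
have hak1 : k1 <= a by apply: hk1; exists b.
have hak0 : k0 <= k0 + k1 - a by apply: hk0; exists (n0 + n1 - b).
have ea : a = k1 by lia.
move: ha hb hab; rewrite ea => ha hb hab.
have e0 : k0 + k1 - k1 = k0 by lia.
rewrite e0 in hb.
have := hn1m _ ha; have := hn0m _ hb => ? ?.
have eb : b = n1 by lia.
by move: hab; rewrite eb eqxx.
Qed.

Lemma YW0l (phi : nat -> int -> CC) (V : lmodType CC) (Y : V -> V -> int -> V) (one : V)
  (W : lmodType CC) (YW : V -> W -> int -> W) :
  phi_quasi_module phi Y one YW -> forall w n, YW 0 w n = 0.
Proof.
move=> hW w n; have := qm_linl hW w n 1 0 0.
rewrite scaler0 addr0 scale1r => h.
have : YW 0 w n + YW 0 w n = YW 0 w n + 0 by rewrite addr0 -h.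
by move/addrI.
Qed.

Lemma YW0r (phi : nat -> int -> CC) (V : lmodType CC) (Y : V -> V -> int -> V) (one : V)
  (W : lmodType CC) (YW : V -> W -> int -> W) :
  phi_quasi_module phi Y one YW -> forall u n, YW u 0 n = 0.
Proof.
move=> hW u n; have := qm_linr hW u n 1 0 0.
rewrite scaler0 addr0 scale1r => h.
have : YW u 0 n + YW u 0 n = YW u 0 n + 0 by rewrite addr0 -h.
by move/addrI.
Qed.

Lemma homb_of (W : lmodType CC) (F : int -> int -> W) :
  (exists N, forall m n, (m < N \/ n < N) -> F m n = 0) -> exists N, homb N F.
Proof.
move=> [N h]; exists N => m l nz.
case: (boolP (N <= m)) => hm; case: (boolP (N <= l)) => hl //;
  exfalso; move: nz; rewrite h ?eqxx //; lia.
Qed.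

Theorem lemma3p6 (phi : nat -> int -> CC) (V : lmodType CC)
  (Y : V -> V -> int -> V) (one : V) (W : lmodType CC)
  (YW : V -> W -> int -> W) :
  associate phi -> nlva Y one -> phi_quasi_module phi Y one YW ->
  forall (u v : V) (q : nat -> nat -> CC),
    in_hom2 (fun w => mul2 (natE2 q) (YYW YW u v w)) ->
    forall w : W,
      mul2 (subst (W := CC^o) phi (natE2 q)) (fun k n => YW (Y u v k) w n)
        = subst phi (mul2 (natE2 q) (YYW YW u v w)).
Proof.
move=> hphi hY hW u v q hq w.
have [g [g0 [gs gphi]]] := exists_g hphi.
have [p [hp0 [hpH hpE]]] := qm_assoc hW u v.
have [NG hG] : exists N, homb N (mul2 (natE2 q) (YYW YW u v w)).
  by apply: homb_of; exact: hq.
have [NH hH] : exists N, homb N (mul2 (natE2 p) (YYW YW u v w)).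
  by apply: homb_of; exact: hpH.
have E1 := hpE w.
have hb0 : forall s, homb 0 (natE2 s) := fun s m l h => natE2_nz h.
have lP := lowb_subst hphi g0 gs gphi (hb0 p).
have lQ := lowb_subst hphi g0 gs gphi (hb0 q).
have lsG := lowb_subst hphi g0 gs gphi hG.
have lA : lowb (fun k n => YW (Y u v k) w n).
  have [K hK] := nlva_trunc hY u v.
  have /choice [lo hlo] : forall k, exists N, forall n, n < N -> YW (Y u v k) w n = 0.
    by move=> k; exact: qm_trunc hW (Y u v k) w.
  exists K, lo => k n nz; split.
    by rewrite leNgt; apply/negP => hk; move: nz; rewrite (hK k hk) (YW0l hW) eqxx.
  by rewrite leNgt; apply/negP => hn; move: nz; rewrite hlo ?eqxx.
have lYY : lowb (tr (YYW YW u v w)).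
  have [K hK] := qm_trunc hW v w.
  have /choice [lo hlo] : forall l, exists N, forall m, m < N -> YW u (YW v w l) m = 0.
    by move=> l; exact: qm_trunc hW u (YW v w l).
  exists K, lo => k n; rewrite /tr /YYW => nz; split.
    by rewrite leNgt; apply/negP => hk; move: nz; rewrite (hK k hk) (YW0r hW) eqxx.
  by rewrite leNgt; apply/negP => hn; move: nz; rewrite hlo ?eqxx.
have lTn : forall s, lowb (tr (natE2 s)).
  by move=> s; exists 0, (fun _ => 0) => k n /natE2_nz [? ?]; split.
have swapqp : mul2 (natE2 q) (mul2 (natE2 p) (YYW YW u v w)) =
              mul2 (natE2 p) (mul2 (natE2 q) (YYW YW u v w)).
  apply/funext => k; apply/funext => n.
  have [N1 H1] := trip_finT k n (lTn q) (lTn p) lYY.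
  have [N2 H2] := trip_finT k n (lTn p) (lTn q) lYY.
  by rewrite (mul2A H1) (mul2A H2) (mul2C (natE2 q)).
have key : forall k n,
  mul2 (subst (W := CC^o) phi (natE2 p))
    (mul2 (subst (W := CC^o) phi (natE2 q)) (fun k n => YW (Y u v k) w n)) k n =
  mul2 (subst (W := CC^o) phi (natE2 p))
    (subst phi (mul2 (natE2 q) (YYW YW u v w))) k n.
  move=> k n.
  have [N1 H1] := trip_fin k n lP lQ lA.
  have [N2 H2] := trip_fin k n lQ lP lA.
  rewrite (mul2A H1) (mul2C (subst (W := CC^o) phi (natE2 p))) -(mul2A H2) E1.
  rewrite -(subst_mul hphi g0 gs gphi q hH) swapqp (subst_mul hphi g0 gs gphi p hG).
  by [].
have lQA := lowb_mul2 lQ lA.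
have X0 := cancel2 lP (lowb_sub lQA lsG) hp0.
apply/funext => k; apply/funext => n; apply/eqP; rewrite -subr_eq0; apply/eqP.
apply: X0 => k' n'.
have [N1 H1] := pair_fin k' n' lP lQA.
have [N2 H2] := pair_fin k' n' lP lsG.
rewrite (mul2_sub (N := maxn N1 N2)) ?key ?subrr //.
  by move=> pp a b; apply: pbox_mono (H1 pp a b); rewrite leq_maxl.
by move=> pp a b; apply: pbox_mono (H2 pp a b); rewrite leq_maxr.
Qed.
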